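(* Let $m\ge 1$ and $p\in S_m$. Then the following are equivalent: (i) for every $n\ge 2$, only finitely many $\omega\in\widetilde{S}_n$ avoid $p$; (ii) $p$ avoids the pattern $321$. Moreover, if $p$ contains $321$ then for every $n\ge2$ there are infinitely many $\omega\in\widetilde{S}_n$ avoiding $p$.
   Context: For $n\ge 2$, the affine symmetric group $\widetilde{S}_n$ is the set of bijections $\omega:\mathbb{Z}\to\mathbb{Z}$ such that $\omega(i+n)=\omega(i)+n$ for all $i\in\mathbb{Z}$ and $\sum_{i=1}^n\omega(i)=\binom{n+1}{2}$; write $\omega_i=\omega(i)$, and $[\omega_1,\dots,\omega_n]$ (the base window) determines $\omega$. For $p\in S_k$ (a permutation of $\{1,\dots,k\}$, written in one-line notation $p_1\cdots p_k$), $\omega$ contains $p$ if there exist integers $i_1<\cdots<i_k$ (arbitrary integers, not necessarily in $\{1,\dots,n\}$) such that $\omega_{i_1}\cdots\omega_{i_k}$ has the same relative order as $p_1\cdots p_k$ (i.e. $\omega_{i_a}<\omega_{i_b}$ iff $p_a<p_b$); otherwise $\omega$ avoids $p$. The same notion of containment/avoidance is used between ordinary permutations. *)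

(* Defs.v *)
From HB Require Import structures.
From mathcomp Require Import all_boot all_order all_algebra all_fingroup.
From Stdlib Require Import List.
Set Implicit Arguments. Unset Strict Implicit. Unset Printing Implicit Defensive.
Import Order.TTheory GRing.Theory Num.Theory.
Local Open Scope ring_scope.

Definition affine_perm (n : nat) (w : int -> int) : Prop :=
  bijective w /\
  (forall i : int, w (i + n%:Z) = w i + n%:Z) /\
  \sum_(1 <= i < n.+1) w i%:Z = ('C(n.+1, 2))%:Z.

Definition aff_contains (k : nat) (w : int -> int) (p : 'S_k) : Prop :=
  exists idx : 'I_k -> int,
    (forall a b : 'I_k, (a < b)%N -> idx a < idx b) /\
    (forall a b : 'I_k, w (idx a) < w (idx b) <-> (p a < p b)%N).

Definition aff_avoids (k : nat) (w : int -> int) (p : 'S_k) : Prop :=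
  ~ aff_contains w p.

Definition perm_contains (m k : nat) (p : 'S_m) (q : 'S_k) : Prop :=
  exists idx : 'I_k -> 'I_m,
    (forall a b : 'I_k, (a < b)%N -> (idx a < idx b)%N) /\
    (forall a b : 'I_k, (p (idx a) < p (idx b))%N <-> (q a < q b)%N).

Definition perm_avoids (m k : nat) (p : 'S_m) (q : 'S_k) : Prop :=
  ~ perm_contains p q.

Definition pat321 : 'S_3 := perm (@rev_ord_inj 3).

Definition finitely_many (P : (int -> int) -> Prop) : Prop :=
  exists l : list (int -> int),
    forall w, P w -> exists g, In g l /\ (forall x, w x = g x).

(* Main.v *)
Require Import Defs.
From HB Require Import structures.
From mathcomp Require Import all_boot all_order all_algebra all_fingroup.
From Stdlib Require Import Lia.
From Stdlib Require BinInt.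
Set Implicit Arguments. Unset Strict Implicit. Unset Printing Implicit Defensive.
Import Order.TTheory GRing.Theory Num.Theory.

Ltac tonat := repeat match goal with
  | H : is_true (~~ leq _ _) |- _ => rewrite -ltnNge in H
  | H : is_true (~~ ltn _ _) |- _ => rewrite -leqNgt in H
  | H : is_true (leq _ _) |- _ => move/ssrnat.leP in H
  | H : is_true (ltn _ _) |- _ => move/ssrnat.ltP in H
  | |- is_true (~~ leq _ _) => rewrite -ltnNge
  | |- is_true (~~ ltn _ _) => rewrite -leqNgt
  | |- is_true (leq _ _) => apply/ssrnat.leP
  | |- is_true (ltn _ _) => apply/ssrnat.ltP
  end.
Ltac nlia := intros; tonat; change addn with Nat.add in *; change subn with Nat.sub in *; change muln with Nat.mul in *; lia.

Definition isU (v : nat -> nat) (a : nat) : bool := all (fun b => v b < v a) (iota 0 a).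

Record band (X Y : nat -> int) (w : int -> int) (E : nat) : Prop := Band {
  bXX : forall t t', t < t' -> (X t < X t')%R;
  bYY : forall s s', s < s' -> (Y s < Y s')%R;
  bXY : forall t s, t <= s -> (X t < Y s)%R;
  bYX : forall t s, s < t -> (Y s < X t)%R;
  wXX : forall t t', t < t' -> (w (X t) < w (X t'))%R;
  wYY : forall s s', s < s' -> (w (Y s) < w (Y s'))%R;
  wXY : forall t s, t + E <= s -> (w (X t) < w (Y s))%R;
  wYX : forall t s, s < t + E -> (w (Y s) < w (X t))%R }.

Definition no321 (v : nat -> nat) (m : nat) : Prop :=
  forall a b c, a < b -> b < c -> c < m -> v b < v a -> v c < v b -> False.

Definition injm (v : nat -> nat) (m : nat) : Prop :=
  forall a b, a < m -> b < m -> v a = v b -> a = b.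

Definition posf (X Y : nat -> int) v (c : nat -> nat) a :=
  if isU v a then X (c a) else Y (c a).

Definition Inv (X Y : nat -> int) (w : int -> int) (E : nat) (v : nat -> nat) (k : nat) (c : nat -> nat) (M B : nat) : Prop :=
 [/\ (forall a b, a < b -> b < k -> (posf X Y v c a < posf X Y v c b)%R),
     (forall a b, a < k -> b < k -> v a < v b -> (w (posf X Y v c a) < w (posf X Y v c b))%R),
     (forall a, a < k -> c a <= M),
     (forall a b, a < k -> b < k -> isU v a -> isU v b -> v a < v b -> c a + B <= c b) &
     (forall a, a < k -> isU v a -> (forall b, b < k -> ~~ isU v b -> v b < v a) -> M + B <= c a + E)].

Lemma foldr_max_ge x0 l : x0 <= foldr maxn x0 l.
Proof. elim: l => //= y l IH; by rewrite leq_max IH orbT. Qed.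

Lemma foldr_max_in x0 l y : y \in l -> y <= foldr maxn x0 l.
Proof.
elim: l => //= z l IH; rewrite in_cons => /orP [/eqP -> | /IH h]; rewrite leq_max ?leqnn //.
by rewrite h orbT.
Qed.

Lemma foldr_max_cases x0 l : foldr maxn x0 l = x0 \/ foldr maxn x0 l \in l.
Proof.
elim: l => //= [|z l IH]; first by left.
case: (leqP z (foldr maxn x0 l)) => h.
- case: IH => IH; [by left | by right; rewrite in_cons IH orbT].
- by right; rewrite in_cons eqxx.
Qed.

Lemma notU_big v m b : injm v m -> b < m -> ~~ isU v b -> exists a, a < b /\ v b < v a.
Proof.
move=> hinj hb; rewrite /isU -has_predC => /hasP [a]; rewrite mem_iota /= add0n => ha.
rewrite -leqNgt leq_eqVlt => /orP [/eqP e|h]; last by exists a.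
have := hinj a b (ltn_trans ha hb) hb (esym e) => eab. by rewrite eab ltnn in ha.
Qed.

Lemma L_prev_smaller v m k b : injm v m -> no321 v m -> k < m -> b < k ->
  ~~ isU v b -> v b < v k.
Proof.
move=> hinj h321 hk hbk hb.
have hbm : b < m by apply: ltn_trans hk.
have [a [hab hva]] := notU_big hinj hbm hb.
case: (ltngtP (v b) (v k)) => // h.
- exfalso; exact: (h321 a b k hab hbk hk hva h).
- have := hinj b k hbm hk h => e. by rewrite e ltnn in hbk.
Qed.

Lemma isU_lt v k b : isU v k -> b < k -> v b < v k.
Proof. by move=> /allP h hb; apply: h; rewrite mem_iota. Qed.

Lemma ltS_cases a k : a < k.+1 -> a = k \/ a < k.
Proof. rewrite ltnS leq_eqVlt => /orP [/eqP ->|h]; by [left|right]. Qed.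

Lemma posf_eq X Y v c c' a : c' a = c a -> posf X Y v c' a = posf X Y v c a.
Proof. by rewrite /posf => ->. Qed.

Lemma stepU X Y w E v k c M B' : band X Y w E -> B' <= E -> 0 < B' ->
  isU v k -> Inv X Y w E v k c M (2 * B') ->
  Inv X Y w E v k.+1 (fun a => if a == k then M + B' else c a) (M + B') B'.
Proof.
move=> hb hBE hB0 hUk [hP hV hM hI1 hI2].
set c' := fun a => _.
have ec a : a < k -> c' a = c a by move=> ha; rewrite /c' (ltn_eqF ha).
have ek : posf X Y v c' k = X (M + B') by rewrite /posf hUk /c' eqxx.
have hpk a : a < k -> (posf X Y v c a < X (M + B')%N)%R.
  move=> ha; rewrite /posf; case: (isU v a).
  - apply: (bXX hb); have := hM a ha; nlia.
  - apply: (bYX hb); have := hM a ha; nlia.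
have hwk a : a < k -> (w (posf X Y v c a) < w (X (M + B')%N))%R.
  move=> ha; rewrite /posf; case: (isU v a).
  - apply: (wXX hb); have := hM a ha; nlia.
  - apply: (wYX hb); have := hM a ha; nlia.
split.
- move=> a b hab /ltS_cases [eb|hb']; first subst b.
  + by rewrite ek (posf_eq _ _ _ (ec a hab)); apply: hpk.
  + by rewrite (posf_eq _ _ _ (ec a (ltn_trans hab hb'))) (posf_eq _ _ _ (ec b hb')); apply: hP.
- move=> a b /ltS_cases [->|ha] /ltS_cases [->|hb'] hv.
  + by rewrite ltnn in hv.
  + exfalso; have := isU_lt hUk hb'; nlia.
  + by rewrite ek (posf_eq _ _ _ (ec a ha)); apply: hwk.
  + by rewrite (posf_eq _ _ _ (ec a ha)) (posf_eq _ _ _ (ec b hb')); apply: hV.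
- move=> a /ltS_cases [->|ha]; first by rewrite /c' eqxx.
  rewrite ec //; have := hM a ha; nlia.
- move=> a b /ltS_cases [->|ha] /ltS_cases [->|hb'] hUa hUb hv.
  + by rewrite ltnn in hv.
  + exfalso; have := isU_lt hUk hb'; nlia.
  + rewrite ec // /c' eqxx; have := hM a ha; nlia.
  + rewrite !ec //; have := hI1 a b ha hb' hUa hUb hv; nlia.
- move=> a /ltS_cases [->|ha] hUa hL.
  + rewrite /c' eqxx; nlia.
  + rewrite ec //.
    have h : forall b, b < k -> ~~ isU v b -> v b < v a.
      by move=> b hb' hnb; apply: hL => //; apply: ltnW.
    have := hI2 a ha hUa h; nlia.
Qed.

Lemma stepL X Y w E v m k c M B' : band X Y w E -> 0 < B' -> k < m ->
  injm v m -> no321 v m -> ~~ isU v k -> Inv X Y w E v k c M (2 * B') ->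
  let s := foldr maxn M.+1 [seq c a + E | a <- iota 0 k & isU v a && (v a < v k)] in
  Inv X Y w E v k.+1 (fun a => if a == k then s else c a) s B'.
Proof.
move=> hb hB0 hk hinj h321 hUk [hP hV hM hI1 hI2] s.
set c' := fun a => _.
have ec a : a < k -> c' a = c a by move=> ha; rewrite /c' (ltn_eqF ha).
have ek : posf X Y v c' k = Y s by rewrite /posf (negbTE hUk) /c' eqxx.
have hs1 : M.+1 <= s by apply: foldr_max_ge.
have hs2 a : a < k -> isU v a -> v a < v k -> c a + E <= s.
  move=> ha hUa hva; apply: foldr_max_in; apply/mapP; exists a => //.
  by rewrite mem_filter hUa hva mem_iota.
have hs3 : s = M.+1 \/ exists a, [/\ a < k, isU v a, v a < v k & s = c a + E].
  case: (foldr_max_cases M.+1 [seq c a + E | a <- iota 0 k & isU v a && (v a < v k)]) => h.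
  - by left.
  - right; move/mapP: h => [a]; rewrite mem_filter mem_iota /= add0n => /andP [/andP [hUa hva] ha] e.
    by exists a.
have hLk b : b < k -> ~~ isU v b -> v b < v k.
  by move=> hbk hnb; apply: (L_prev_smaller hinj h321 hk hbk hnb).
have hUbig a : a < k -> isU v a -> v k < v a -> s < c a + E.
  move=> ha hUa hva; case: hs3 => [->|[a' [ha' hUa' hva' ->]]].
  - have h : forall b, b < k -> ~~ isU v b -> v b < v a.
      by move=> b hbk hnb; apply: ltn_trans (hLk b hbk hnb) hva.
    have := hI2 a ha hUa h; nlia.
  - have := hI1 a' a ha' ha hUa' hUa (ltn_trans hva' hva); nlia.
have hpk a : a < k -> (posf X Y v c a < Y s)%R.
  move=> ha; rewrite /posf; case: (isU v a).
  - apply: (bXY hb); have := hM a ha; nlia.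
  - apply: (bYY hb); have := hM a ha; nlia.
split.
- move=> a b hab /ltS_cases [eb|hb']; first subst b.
  + by rewrite ek (posf_eq _ _ _ (ec a hab)); apply: hpk.
  + by rewrite (posf_eq _ _ _ (ec a (ltn_trans hab hb'))) (posf_eq _ _ _ (ec b hb')); apply: hP.
- move=> a b /ltS_cases [->|ha] /ltS_cases [->|hb'] hv.
  + by rewrite ltnn in hv.
  + rewrite ek (posf_eq _ _ _ (ec b hb')).
    case hUb : (isU v b); last by move: (hLk b hb'); rewrite hUb => /(_ isT); nlia.
    rewrite /posf hUb; apply: (wYX hb); exact: hUbig.
  + rewrite ek (posf_eq _ _ _ (ec a ha)) /posf.
    case hUa : (isU v a).
    * apply: (wXY hb); exact: hs2.
    * apply: (wYY hb); have := hM a ha; nlia.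
  + by rewrite (posf_eq _ _ _ (ec a ha)) (posf_eq _ _ _ (ec b hb')); apply: hV.
- move=> a /ltS_cases [->|ha]; first by rewrite /c' eqxx.
  rewrite ec //; have := hM a ha; nlia.
- move=> a b /ltS_cases [->|ha] /ltS_cases [->|hb'] hUa hUb hv.
  + by rewrite ltnn in hv.
  + by rewrite hUa in hUk.
  + by rewrite hUb in hUk.
  + rewrite !ec //; have := hI1 a b ha hb' hUa hUb hv; nlia.
- move=> a /ltS_cases [->|ha] hUa hL; first by rewrite hUa in hUk.
  rewrite ec //.
  have hva : v k < v a by apply: hL => //; rewrite /c'.
  case: hs3 => [->|[a' [ha' hUa' hva' ->]]].
  + have h : forall b, b < k -> ~~ isU v b -> v b < v a.
      by move=> b hbk hnb; apply: hL => //; apply: ltnW.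
    have := hI2 a ha hUa h; nlia.
  + have := hI1 a' a ha' ha hUa' hUa (ltn_trans hva' hva); nlia.
Qed.

Lemma inv_all X Y w E v m : band X Y w E -> 2 ^ m.+1 <= E ->
  injm v m -> no321 v m ->
  forall k, k <= m -> exists c M, Inv X Y w E v k c M (2 ^ (m.+1 - k)).
Proof.
move=> hb hE hinj h321; elim=> [|k IH] hk.
- exists (fun _ => 0), 0; split => //.
have [c [M hI]] := IH (ltnW hk).
have eB : 2 ^ (m.+1 - k) = 2 * 2 ^ (m.+1 - k.+1).
  by rewrite subSS -expnS subSn //; exact: ltnW hk.
have hB0 : 0 < 2 ^ (m.+1 - k.+1) by rewrite expn_gt0.
rewrite eB in hI.
case hU : (isU v k).
- exists (fun a => if a == k then M + 2 ^ (m.+1 - k.+1) else c a), (M + 2 ^ (m.+1 - k.+1)).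
  apply: stepU => //.
  apply: leq_trans hE; rewrite leq_exp2l //; nlia.
- exists (fun a => if a == k then foldr maxn M.+1 [seq c a + E | a <- iota 0 k & isU v a && (v a < v k)] else c a).
  exists (foldr maxn M.+1 [seq c a + E | a <- iota 0 k & isU v a && (v a < v k)]).
  by apply: (stepL hb hB0 hk hinj h321) => //; rewrite hU.
Qed.

Lemma band_embed X Y w E v m : band X Y w E -> 2 ^ m.+1 <= E ->
  injm v m -> no321 v m ->
  exists f : nat -> int, (forall a b, a < b -> b < m -> (f a < f b)%R) /\
    (forall a b, a < m -> b < m -> v a < v b -> (w (f a) < w (f b))%R).
Proof.
move=> hb hE hinj h321.
have [c [M [hP hV _ _ _]]] := inv_all hb hE hinj h321 (leqnn m).
by exists (posf X Y v c).
Qed.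

Module ZiM.
Import BinInt.

Definition phi (x : int) : BinNums.Z :=
  match x with Posz n => Z.of_nat n | Negz n => Z.sub (Z.opp (Z.of_nat n)) (Zpos xH) end.

Lemma phi_nat (n : nat) : phi (Posz n) = Z.of_nat n. Proof. by []. Qed.

Lemma phiN x : phi (- x)%R = Z.opp (phi x).
Proof.
case: x => [[|n]|n] /=; rewrite /GRing.opp /=; try lia.
Qed.

Lemma phiD x y : phi (x + y)%R = Z.add (phi x) (phi y).
Proof.
case: x => a; case: y => b; rewrite /GRing.add /= /intZmod.addz /=;
  try (case: ltnP => h /=); tonat;
  change addn with Nat.add in *; change subn with Nat.sub in *; try lia.
Qed.

Lemma phi0 : phi 0%R = Z0. Proof. by []. Qed.
Lemma phi1 : phi 1%R = Zpos xH. Proof. by []. Qed.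
Lemma phiB x y : phi (x - y)%R = Z.sub (phi x) (phi y).
Proof. by rewrite phiD phiN; lia. Qed.

Lemma phi_gt0 z : (0 < z)%R <-> Z.lt Z0 (phi z).
Proof. case: z => [[|n]|n] /=; split => //; lia. Qed.

Lemma phi_ge0 z : (0 <= z)%R <-> Z.le Z0 (phi z).
Proof. case: z => [[|n]|n] /=; split => //; lia. Qed.

Lemma phi_lt x y : (x < y)%R <-> Z.lt (phi x) (phi y).
Proof. rewrite -subr_gt0 phi_gt0 phiB; lia. Qed.

Lemma phi_le x y : (x <= y)%R <-> Z.le (phi x) (phi y).
Proof. rewrite -subr_ge0 phi_ge0 phiB; lia. Qed.

Lemma phi_inj x y : phi x = phi y -> x = y.
Proof. case: x => a; case: y => b h; rewrite /phi in h; [congr Posz; lia | exfalso; lia | exfalso; lia | congr Negz; lia]. Qed.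

Lemma phi_eq x y : x = y <-> phi x = phi y.
Proof. split; [by move=> -> | exact: phi_inj]. Qed.

Lemma phi_neq x y : (x != y) <-> phi x <> phi y.
Proof. split; [move=> /eqP h e; apply: h; exact: phi_inj | move=> h; apply/eqP => e; apply: h; by rewrite e]. Qed.

Ltac zify_int := repeat match goal with
  | H : is_true (@Order.lt _ _ _ _) |- _ => apply phi_lt in H
  | H : is_true (@Order.le _ _ _ _) |- _ => apply phi_le in H
  | H : is_true (~~ (@Order.lt _ _ _ _)) |- _ => rewrite -leNgt in H
  | H : is_true (~~ (@Order.le _ _ _ _)) |- _ => rewrite -ltNge in H
  | H : @eq ?T _ _ |- _ => unify T int; apply -> phi_eq in H
  | |- is_true (@Order.lt _ _ _ _) => apply phi_lt
  | |- is_true (@Order.le _ _ _ _) => apply phi_le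
  | |- @eq ?T _ _ => unify T int; apply <- phi_eq
  end;
  repeat (match goal with H : context[phi _] |- _ => revert H end);
  rewrite ?(phiD, phiN, phiB, phi0, phi1, phi_nat); intros.

Ltac zlia := intros; tonat; zify_int; change addn with Nat.add in *; change subn with Nat.sub in *; change muln with Nat.mul in *; lia.


End ZiM.
Import ZiM.
From Stdlib Require Import List.


Definition vp m (p : 'S_m) (a : nat) : nat :=
  match insub a with Some o => nat_of_ord (p o) | None => 0 end.

Lemma vp_ord m (p : 'S_m) a (ha : a < m) : vp p a = p (Ordinal ha).
Proof. by rewrite /vp insubT. Qed.

Lemma vpE m (p : 'S_m) (o : 'I_m) : vp p o = p o.
Proof. by case: o => a ha; rewrite vp_ord. Qed.

Lemma injm_vp m (p : 'S_m) : injm (vp p) m.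
Proof.
move=> a b ha hb; rewrite !vp_ord => /val_inj /perm_inj e.
by have := congr1 val e.
Qed.

Lemma pat321E (o : 'I_3) : nat_of_ord (pat321 o) = 2 - o.
Proof. by rewrite /pat321 permE /=; case: o => [[|[|[|?]]] ?]. Qed.

Lemma no321_vp m (p : 'S_m) : perm_avoids p pat321 -> no321 (vp p) m.
Proof.
move=> hav a b c hab hbc hc h1 h2; apply: hav.
have hb : b < m by apply: ltn_trans hc.
have ha : a < m by apply: ltn_trans hb.
pose idx := fun o : 'I_3 => if val o == 0 then Ordinal ha else if val o == 1 then Ordinal hb else Ordinal hc.
rewrite !vp_ord in h1 h2.
exists idx; split.
- by case=> [[|[|[|?]]] ?] [[|[|[|?]]] ?] //= _; rewrite ?(ltn_trans hab hbc).
- case=> [[|[|[|?]]] ?] [[|[|[|?]]] ?] //=; rewrite !pat321E /=; split => //= h;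
   try (by rewrite ltnn in h);
   try (by move: (ltn_trans h h1); rewrite ltnn);
   try (by move: (ltn_trans h h2); rewrite ltnn);
   try (by move: (ltn_trans h (ltn_trans h2 h1)); rewrite ltnn);
   try (by apply: ltn_trans h2 h1).
Qed.

Lemma contains_of_embed (w : int -> int) m (p : 'S_m) (f : nat -> int) :
  (forall a b, a < b -> b < m -> (f a < f b)%R) ->
  (forall a b, a < m -> b < m -> vp p a < vp p b -> (w (f a) < w (f b))%R) ->
  aff_contains w p.
Proof.
move=> hP hV; exists (fun o => f o); split.
- by move=> a b hab; apply: hP.
- move=> a b; split => h.
  + rewrite ltnNge; apply/negP => h0; rewrite leq_eqVlt in h0.
    case/orP: h0 => [/eqP e0|h'].
    * have e : b = a by apply: (@perm_inj _ p); apply: val_inj; exact: e0.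
      by move: h; rewrite e ltxx.
    * have := hV b a (ltn_ord b) (ltn_ord a); rewrite !vpE => /(_ h') h2.
      by move: (lt_trans h h2); rewrite ltxx.
  + by have := hV a b (ltn_ord a) (ltn_ord b); rewrite !vpE => /(_ h).
Qed.

Lemma contains_trans (w : int -> int) m (p : 'S_m) :
  aff_contains w p -> perm_contains p pat321 -> aff_contains w pat321.
Proof.
move=> [idx [h1 h2]] [jdx [h3 h4]]; exists (fun o => idx (jdx o)); split.
- by move=> a b hab; apply: h1; apply: h3.
- by move=> a b; rewrite h2 h4.
Qed.


Ltac nnia := intros; tonat; change addn with Nat.add in *; change subn with Nat.sub in *; change muln with Nat.mul in *; nia.

Lemma per_nat (w : int -> int) (n : nat) :
  (forall x, w (x + n%:Z) = w x + n%:Z)%R ->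
  forall x k, (w (x + (k * n)%:Z) = w x + (k * n)%:Z)%R.
Proof.
move=> hper x; elim=> [|k IH]; first by rewrite mul0n !addr0.
by rewrite mulSn PoszD (addrC (Posz n)) addrA hper IH -addrA.
Qed.

Lemma mk_band (w : int -> int) (n : nat) (i0 : int) (d g : nat) :
  (forall x, w (x + n%:Z) = w x + n%:Z)%R -> injective w -> 0 < d -> d < n -> 0 < g ->
  w i0 = (w (i0 + d%:Z) + g%:Z)%R ->
  band (fun t => i0 + (t * n)%:Z)%R (fun s => i0 + (d + s * n)%:Z)%R w (g %/ n).+1.
Proof.
move=> hper hinj hd hdn hg hw.
have hn : 0 < n by apply: leq_trans hdn.
have hp := per_nat hper.
set j0 := (i0 + d%:Z)%R.
have eY s : (i0 + (d + s * n)%:Z = j0 + (s * n)%:Z)%R by rewrite PoszD addrA.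
have wX t : w (i0 + (t * n)%:Z)%R = (w j0 + (g + t * n)%:Z)%R by rewrite hp hw PoszD addrA.
have wY s : w (i0 + (d + s * n)%:Z)%R = (w j0 + (s * n)%:Z)%R by rewrite eY hp.
have hmod : g %% n != 0.
  apply/negP => /eqP h0.
  have eg : g = g %/ n * n by rewrite {1}(divn_eq g n) h0 addn0.
  have : w i0 = w (j0 + ((g %/ n) * n)%:Z)%R by rewrite hp hw -eg.
  move/hinj; rewrite /j0 -addrA -{1}(addr0 i0) => /addrI /eqP.
  rewrite -PoszD => /eqP /(congr1 absz) /= h1; move: hd; rewrite h1; nnia.
have hq1 : g < (g %/ n).+1 * n by apply: ltn_ceil.
have hq2 : g %/ n * n < g.
  rewrite {2}(divn_eq g n) -{1}(addn0 (g %/ n * n)) ltn_add2l lt0n //.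
split.
- move=> t t' h; rewrite ltrD2l ltz_nat; nnia.
- move=> s s' h; rewrite ltrD2l ltz_nat; nnia.
- move=> t s h; rewrite ltrD2l ltz_nat; nnia.
- move=> t s h; rewrite ltrD2l ltz_nat; nnia.
- move=> t t' h; rewrite !wX ltrD2l ltz_nat; nnia.
- move=> s s' h; rewrite !wY ltrD2l ltz_nat; nnia.
- move=> t s h; rewrite wX wY ltrD2l ltz_nat; nnia.
- move=> t s h; rewrite wX wY ltrD2l ltz_nat; nnia.
Qed.

Lemma sum_id n : (\sum_(1 <= i < n.+1) (i%:Z) = ('C(n.+1, 2))%:Z)%R.
Proof.
elim: n => [|n IH]; first by rewrite big_geq.
by rewrite big_nat_recr //= IH [in RHS]binS bin1 PoszD.
Qed.

Lemma sum_pos (f : nat -> int) n : 0 < n -> (forall i, 0 < i -> i <= n -> (0 < f i)%R) ->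
  (0 < \sum_(1 <= i < n.+1) f i)%R.
Proof.
elim: n => [//|n IH] _ h.
rewrite big_nat_recr //=.
case: n IH h => [|n] IH h.
- by rewrite big_geq // add0r; apply: h.
- apply: ltr_wpDl; last by apply: h.
  by apply: ltW; apply: IH => // i hi hin; apply: h => //; apply: leq_trans hin _.
Qed.

Lemma exists_nonpos (f : nat -> int) n : 0 < n -> (\sum_(1 <= i < n.+1) f i = 0)%R ->
  exists k, [/\ 0 < k, k <= n & (f k <= 0)%R].
Proof.
move=> hn hs.
case hh : (has (fun k => f k <= 0)%R (iota 1 n)).
- move/hasP: hh => [k]; rewrite mem_iota => /andP [h1 h2] h3.
  by exists k; split => //; rewrite -ltnS -(add1n n).
- exfalso; move/hasPn: hh => hh.
  have : (0 < \sum_(1 <= i < n.+1) f i)%R.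
    apply: sum_pos => // i h1 h2; rewrite ltNge; apply: hh.
    rewrite mem_iota h1 /=; nlia.
  by rewrite hs ltxx.
Qed.

Lemma int_nat (x : int) : (0 <= x)%R -> exists g : nat, x = Posz g.
Proof. by case: x => [g|//] _; exists g. Qed.

Lemma big_pair (w : int -> int) (n K a b : nat) :
  (forall x, w (x + (Posz n)) = w x + (Posz n))%R -> 0 < a -> a <= n -> 0 < b -> b <= n ->
  ((Posz (K + n)) + (w (Posz b) - (Posz b)) < w (Posz a) - (Posz a))%R ->
  exists (i0 : int) (d g : nat), [/\ 0 < d, d < n, K < g & w i0 = (w (i0 + (Posz d)) + (Posz g))%R].
Proof.
move=> hper ha1 ha2 hb1 hb2 h.
case: (ltngtP a b) => hab.
- have [g eg] : exists g : nat, (w (Posz a) - w (Posz b))%R = ((Posz g))%R by apply: int_nat; zlia.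
  exists (Posz a), (b - a), g; split; [nlia|nlia| |].
  + have : ((Posz K) < (Posz g))%R by rewrite -eg; zlia.
    by rewrite ltz_nat.
  + have -> : ((Posz a) + (Posz (b - a)))%R = (Posz b) by zlia.
    zlia.
- have [g eg] : exists g : nat, (w (Posz a) - w (Posz (b + n)))%R = ((Posz g))%R.
    apply: int_nat; rewrite PoszD hper. zlia.
  exists (Posz a), (b + n - a), g; split; [nlia|nlia| |].
  + have : ((Posz K) < (Posz g))%R by rewrite -eg PoszD hper; zlia.
    by rewrite ltz_nat.
  + have -> : ((Posz a) + (Posz (b + n - a)))%R = (Posz (b + n)) by zlia.
    zlia.
- subst b; exfalso; zlia.
Qed.

Lemma contains_of_pair (w : int -> int) (n m : nat) (p : 'S_m) (i0 : int) (d g : nat) :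
  (forall x, w (x + (Posz n)) = w x + (Posz n))%R -> injective w ->
  perm_avoids p pat321 ->
  0 < d -> d < n -> 2 ^ m.+1 * n < g -> w i0 = (w (i0 + (Posz d)) + (Posz g))%R ->
  aff_contains w p.
Proof.
move=> hper hinj hav hd hdn hg hw.
have hn : 0 < n by apply: leq_trans hdn.
have hb := mk_band hper hinj hd hdn (leq_ltn_trans (leq0n _) hg) hw.
have hE : 2 ^ m.+1 <= (g %/ n).+1.
  apply: leqW; rewrite leq_divRL //; exact: ltnW.
have [f [hP hV]] := band_embed hb hE (@injm_vp _ p) (no321_vp hav).
exact: (contains_of_embed hP hV).
Qed.

Lemma sum_d (w : int -> int) n : affine_perm n w ->
  (\sum_(1 <= i < n.+1) (w (Posz i) - Posz i) = 0)%R.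
Proof.
move=> [_ [_ hs]]; by rewrite sumrB hs sum_id subrr.
Qed.

Lemma window_bound (w : int -> int) (n m : nat) (p : 'S_m) :
  affine_perm n w -> 2 <= n -> perm_avoids p pat321 -> aff_avoids w p ->
  forall x : nat, 0 < x -> x <= n ->
    (w (Posz x) - Posz x <= Posz (2 ^ m.+1 * n + n))%R /\
    (- Posz (2 ^ m.+1 * n + n) <= w (Posz x) - Posz x)%R.
Proof.
move=> haff hn hav havo x hx1 hx2.
have [hbij [hper _]] := haff.
have hinj := bij_inj hbij.
have hs := sum_d haff.
have hn0 : 0 < n by apply: leq_trans hn.
split; rewrite leNgt; apply/negP => hc.
- have [b [hb1 hb2 hb3]] := exists_nonpos hn0 hs.
  have : ((Posz (2 ^ m.+1 * n + n)) + (w (Posz b) - (Posz b)) < w (Posz x) - (Posz x))%R by zlia.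
  move/(big_pair hper hx1 hx2 hb1 hb2) => [i0 [d [g [hd hdn hg hw]]]].
  by apply: havo; apply: (contains_of_pair hper hinj hav hd hdn hg hw).
- have hs' : (\sum_(1 <= i < n.+1) (- (w (Posz i) - Posz i)) = 0)%R by rewrite sumrN hs oppr0.
  have [a [ha1 ha2 ha3]] := exists_nonpos hn0 hs'.
  have : ((Posz (2 ^ m.+1 * n + n)) + (w (Posz x) - (Posz x)) < w (Posz a) - (Posz a))%R by zlia.
  move/(big_pair hper ha1 ha2 hx1 hx2) => [i0 [d [g [hd hdn hg hw]]]].
  by apply: havo; apply: (contains_of_pair hper hinj hav hd hdn hg hw).
Qed.


Lemma per_int (w : int -> int) (n : nat) :
  (forall x, w (x + (Posz n)) = w x + (Posz n))%R ->
  forall x (q : int), (w (x + q * Posz n) = w x + q * Posz n)%R.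
Proof.
move=> hper x; case=> k.
- by rewrite -PoszM per_nat.
- have := per_nat hper (x + Negz k * Posz n) k.+1.
  have -> : (x + Negz k * Posz n + Posz (k.+1 * n) = x)%R.
    by rewrite NegzE mulNr PoszM -addrA addNr addr0.
  move=> ->; rewrite NegzE mulNr PoszM.
  by rewrite -addrA subrr addr0.
Qed.

Definition rangeK (K : nat) : list int := [seq (Posz a - Posz K)%R | a <- iota 0 (K + K).+1].

Fixpoint allseqs (R : list int) (k : nat) : list (list int) :=
  if k is k'.+1 then [seq x :: l | x <- R, l <- allseqs R k'] else [:: [::]].

Lemma allseqsP R k l : size l = k -> all (fun y => y \in R) l -> l \in allseqs R k.
Proof.
elim: k l => [|k IH] [|y l] //= [hs] /andP [hy hl].
by apply: allpairs_f => //; apply: IH.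
Qed.

Lemma mem_In (T : eqType) (x : T) (s : list T) : x \in s -> In x s.
Proof. elim: s => //= y s IH; rewrite seq.in_cons => /orP [/eqP ->|h]; [by left | by right; apply: IH]. Qed.

Lemma rangeKP (K : nat) (y : int) : (y <= Posz K)%R -> (- Posz K <= y)%R -> y \in rangeK K.
Proof.
move=> h1 h2.
have [a ea] : exists a : nat, (y + Posz K)%R = Posz a by apply: int_nat; zlia.
apply/mapP; exists a.
- rewrite mem_iota /=; have : (Posz a <= Posz (K + K))%R by rewrite -ea; zlia.
  rewrite lez_nat; nlia.
- zlia.
Qed.

Definition mkw (n : nat) (l : list int) (x : int) : int :=
  (x + seq.nth 0%R l (absz ((x - 1) %% Posz n)%Z))%R.

Lemma finite_window (n K : nat) (P : (int -> int) -> Prop) : 0 < n ->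
  (forall w, P w -> (forall x, w (x + Posz n) = w x + Posz n)%R /\
     forall x : nat, 0 < x -> x <= n ->
       (w (Posz x) - Posz x <= Posz K)%R /\ (- Posz K <= w (Posz x) - Posz x)%R) ->
  finitely_many P.
Proof.
move=> hn hP.
exists (map (mkw n) (allseqs (rangeK K) n)) => w /hP [hper hb].
pose l := [seq (w (Posz r.+1) - Posz r.+1)%R | r <- iota 0 n].
exists (mkw n l); split.
- apply: in_map; apply: mem_In; apply: allseqsP; first by rewrite size_map size_iota.
  apply/allP => y /mapP [r]; rewrite mem_iota /= add0n => hr ->.
  by have [h1 h2] := hb r.+1 isT hr; apply: rangeKP.
- move=> x.
  have hn0 : (Posz n != 0)%R by rewrite eqz_nat -lt0n.
  have [r' er] : exists r' : nat, ((x - 1) %% Posz n)%Z = Posz r' by apply: int_nat; apply: modz_ge0.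
  have hr' : r' < n.
    by rewrite -ltz_nat -er; apply: ltz_pmod; rewrite ltz_nat.
  have ex := divz_eq (x - 1) (Posz n).
  rewrite er in ex.
  rewrite /mkw er /= /l (nth_map 0%N) ?size_iota // nth_iota // add0n.
  have -> : x = (Posz r'.+1 + ((x - 1) %/ Posz n)%Z * Posz n)%R by zlia.
  rewrite per_int //; zlia.
Qed.


Definition cls (n : nat) (x : int) : bool := ((x %% Posz n)%Z == 0%R).

Definition wk (n k : nat) (x : int) : int :=
  if cls n x then (x - Posz ((n - 1) * k * n))%R else (x + Posz (k * n))%R.

Lemma clsD n x (c : nat) : cls n (x + Posz (c * n))%R = cls n x.
Proof. by rewrite /cls PoszM addrC modzMDl. Qed.

Lemma clsB n x (c : nat) : cls n (x - Posz (c * n))%R = cls n x.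
Proof. by rewrite /cls PoszM -mulNr addrC modzMDl. Qed.

Lemma clsn n x : cls n (x + Posz n)%R = cls n x.
Proof. by rewrite /cls modzDr. Qed.

Lemma wk_per n k x : wk n k (x + Posz n)%R = (wk n k x + Posz n)%R.
Proof. rewrite /wk clsn; case: (cls n x); zlia. Qed.

Lemma wk_bij n k : bijective (wk n k).
Proof.
exists (fun y => if cls n y then (y + Posz ((n - 1) * k * n))%R else (y - Posz (k * n))%R).
- move=> x; rewrite /wk; case h: (cls n x).
  + by rewrite clsB h; zlia.
  + by rewrite clsD h; zlia.
- move=> y; case h: (cls n y).
  + by rewrite /wk clsD h; zlia.
  + by rewrite /wk clsB h; zlia.
Qed.

Lemma wk_mono n k x y : cls n x = cls n y -> (x < y)%R -> (wk n k x < wk n k y)%R.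
Proof. rewrite /wk => ->; case: (cls n y); zlia. Qed.

Lemma cls_small n (i : nat) : 0 < i -> i < n -> cls n (Posz i) = false.
Proof.
move=> h1 h2; rewrite /cls modz_nat modn_small //.
by apply/negP => /eqP [e]; rewrite e in h1.
Qed.

Lemma cls_n n : 0 < n -> cls n (Posz n) = true.
Proof. by move=> hn; rewrite /cls modz_nat modnn. Qed.

Lemma wk_sum_part n k j : j < n ->
  (\sum_(1 <= i < j.+1) wk n k (Posz i) = Posz ('C(j.+1, 2)) + Posz (j * (k * n)))%R.
Proof.
elim: j => [|j IH] hj; first by rewrite big_geq.
rewrite big_nat_recr //= IH; last by apply: ltnW.
rewrite /wk cls_small // [in RHS]binS bin1; zlia.
Qed.

Lemma wk_sum n k : 2 <= n ->
  (\sum_(1 <= i < n.+1) wk n k (Posz i) = Posz ('C(n.+1, 2)))%R.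
Proof.
move=> hn; case: n hn => [//|n] hn.
rewrite big_nat_recr //= wk_sum_part // /wk cls_n // [in RHS]binS bin1.
rewrite subn1 /=; zlia.
Qed.

Lemma wk_affine n k : 2 <= n -> affine_perm n (wk n k).
Proof. move=> hn; split; [exact: wk_bij | split; [exact: wk_per | exact: wk_sum]]. Qed.

Lemma wk_avoid321 n k : aff_avoids (wk n k) pat321.
Proof.
move=> [idx [h1 h2]].
pose o0 := (Ordinal (isT : 0 < 3)); pose o1 := (Ordinal (isT : 1 < 3)); pose o2 := (Ordinal (isT : 2 < 3)).
have l01 : (idx o0 < idx o1)%R by apply: h1.
have l12 : (idx o1 < idx o2)%R by apply: h1.
have v10 : (wk n k (idx o1) < wk n k (idx o0))%R by apply/h2; rewrite !pat321E.
have v21 : (wk n k (idx o2) < wk n k (idx o1))%R by apply/h2; rewrite !pat321E.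
case e01 : (cls n (idx o0) == cls n (idx o1)).
- have := wk_mono k (eqP e01) l01; move: v10; zlia.
case e12 : (cls n (idx o1) == cls n (idx o2)).
- have := wk_mono k (eqP e12) l12; move: v21; zlia.
have e02 : cls n (idx o0) = cls n (idx o2).
  by move: e01 e12; case: (cls n (idx o0)); case: (cls n (idx o1)); case: (cls n (idx o2)).
have := wk_mono k e02 (lt_trans l01 l12); move: v10 v21; zlia.
Qed.


Ltac znia := intros; tonat; zify_int; change addn with Nat.add in *; change subn with Nat.sub in *; change muln with Nat.mul in *; nia.

Lemma list_bound (l : list (int -> int)) : exists N : nat, forall g, In g l -> (g 1%R < Posz N)%R.
Proof.
elim: l => [|g l [N hN]]; first by exists 0.
case e : (g 1%R) => [a|a].
- exists (N + a + 1) => h /= [<-|hin]; first by rewrite e; zlia.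
  have := hN h hin; zlia.
- exists (N + 1) => h /= [<-|hin]; first by rewrite e.
  have := hN h hin; zlia.
Qed.

Lemma not_finite n m (p : 'S_m) : 2 <= n -> perm_contains p pat321 ->
  ~ finitely_many (fun w => affine_perm n w /\ aff_avoids w p).
Proof.
move=> hn hc [l hl]; have [N hN] := list_bound l.
have hav : aff_avoids (wk n N) p.
  by move=> hcont; apply: (@wk_avoid321 n N); exact: contains_trans hcont hc.
have [g [hin heq]] := hl (wk n N) (conj (wk_affine N hn) hav).
have := hN g hin; rewrite -heq /wk.
have -> : cls n 1%R = false by apply: (@cls_small n 1).
have : N <= N * n by rewrite leq_pmulr //; apply: leq_trans hn.
zlia.
Qed.

Theorem theorem1 (m : nat) (hm : (1 <= m)%N) (p : 'S_m) :
  ((forall n : nat, (2 <= n)%N ->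
      finitely_many (fun w => affine_perm n w /\ aff_avoids w p))
   <-> perm_avoids p pat321)
  /\
  (perm_contains p pat321 ->
   forall n : nat, (2 <= n)%N ->
     ~ finitely_many (fun w => affine_perm n w /\ aff_avoids w p)).
Proof.
split; last by move=> hc n hn; apply: not_finite.
split.
- by move=> H hc; apply: (not_finite (n:=2)) hc (H 2 isT).
- move=> hav n hn; apply: (@finite_window n (2 ^ m.+1 * n + n)); first by apply: leq_trans hn.
  move=> w [haff havo]; split; first by case: haff => _ [].
  exact: window_bound haff hn hav havo.
Qed.
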